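(* Let $\mathbf{F}$ be a foliage tree and let $X$ be a topological space. (a) $\mathbf{F}$ is a locally strict foliage $\omega,\omega$-tree with strict branches if and only if $\mathbf{F}$ is isomorphic to $\mathbf{S}$. (b) $\mathbf{F}$ is a Baire foliage tree on $X$ if and only if there exist an isomorphism $(\varphi,\psi)$ between $\mathbf{F}$ and $\mathbf{S}$ and a topology $\tau$ on ${}^{\omega}\omega$ such that $\psi$ is a homeomorphism from $X$ onto $({}^{\omega}\omega,\tau)$ and $\mathbf{S}$ is a Baire foliage tree on $({}^{\omega}\omega,\tau)$. (c) $\mathbf{F}$ is a $\pi$-tree on $X$ if and only if there exist an isomorphism $(\varphi,\psi)$ between $\mathbf{F}$ and $\mathbf{S}$ and a topology $\tau$ on ${}^{\omega}\omega$ such that $\psi$ is a homeomorphism from $X$ onto $({}^{\omega}\omega,\tau)$ and $\mathbf{S}$ is a $\pi$-tree on $({}^{\omega}\omega,\tau)$.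
   Context: Natural numbers are von Neumann ordinals, $n=\{0,\dots,n-1\}$, $\omega=\{0,1,2,\dots\}$; ${}^{B}A$ is the set of functions $B\to A$, ${}^{<\omega}\omega=\bigcup_{n\in\omega}{}^{n}\omega$ (finite sequences), ordered by $\subsetneq$ (extension). A tree is a strict partial order $(T,<)$ in which the set of predecessors of every node is well-ordered; $\mathrm{height}_T(x)$ is the ordinal isomorphic to the set of predecessors of $x$; the height of $T$ is the least ordinal $\beta$ such that no node has height $\beta$; a branch is a $\subseteq$-maximal chain; $\mathrm{sons}_T(x)$ is the set of immediate successors of $x$; $\max T$ is the set of maximal nodes; $0_T$ denotes the least node when it exists. A foliage tree is a pair $\mathbf{F}=(T,l)$ with $T$ a tree (the skeleton) and $l$ a function whose domain is the set of nodes of $T$; $\mathbf{F}_x:=l(x)$ is the leaf at $x$; tree notions are applied to $\mathbf{F}$ via its skeleton; $\mathrm{flesh}\,\mathbf{F}=\bigcup_x\mathbf{F}_x$. For a node $v$, $\mathrm{shoot}_{\mathbf{F}}(v)=\{\bigcup_{x\in C}\mathbf{F}_x: C\text{ a cofinite subset of }\mathrm{sons}_{\mathbf{F}}(v)\}$; for a point $p$, $\mathrm{scope}_{\mathbf{F}}(p)=\{x:p\in\mathbf{F}_x\}$. For families $\gamma,\delta$ of sets, $\gamma\gg\delta$ means: for every nonempty $D\in\delta$ there is a nonempty $G\in\gamma$ with $G\subseteq D$. $\mathbf{F}$ is locally strict if for every non-maximal node $x$, $\mathbf{F}_x$ is the union of the pairwise disjoint sets $\mathbf{F}_s$, $s\in\mathrm{sons}_{\mathbf{F}}(x)$;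 $\mathbf{F}$ has strict branches if it has at least one node and for every branch $B$, $\bigcap_{x\in B}\mathbf{F}_x$ is a singleton; $\mathbf{F}$ is open in $X$ if every leaf is open in $X$; $\mathbf{F}$ is a foliage $\omega,\omega$-tree if its skeleton is order-isomorphic to $({}^{<\omega}\omega,\subsetneq)$. $\mathbf{F}$ is a Baire foliage tree on $X$ if it is an open in $X$, locally strict foliage $\omega,\omega$-tree with strict branches and $\mathbf{F}_{0_{\mathbf{F}}}=X$. $\mathbf{F}$ grows into $X$ if for every $p\in X$ and every (not necessarily open) neighbourhood $U$ of $p$ there is $z\in\mathrm{scope}_{\mathbf{F}}(p)$ with $\mathrm{shoot}_{\mathbf{F}}(z)\gg\{U\}$. A $\pi$-tree on $X$ is a Baire foliage tree on $X$ that grows into $X$. The standard foliage tree $\mathbf{S}$ has skeleton $({}^{<\omega}\omega,\subsetneq)$ and leaves $\mathbf{S}_x=\{p\in{}^{\omega}\omega:x\subseteq p\}$. An isomorphism between foliage trees $\mathbf{F}$ and $\mathbf{G}$ is a pair $(\varphi,\psi)$ where $\varphi$ is an order isomorphism from the skeleton of $\mathbf{F}$ onto the skeleton of $\mathbf{G}$, $\psi$ is a bijection from $\mathrm{flesh}\,\mathbf{F}$ onto $\mathrm{flesh}\,\mathbf{G}$, and $\psi[\mathbf{F}_x]=\mathbf{G}_{\varphi(x)}$ for every node $x$ of $\mathbf{F}$. *)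

(* Defs.v *)
From mathcomp Require Import all_boot.
From mathcomp Require Import boolp classical_sets cardinality.

Set Implicit Arguments.
Unset Strict Implicit.
Unset Printing Implicit Defensive.

Local Open Scope classical_set_scope.

Definition is_topology_on {P : Type} (X : set P) (O : set (set P)) : Prop :=
  [/\ (forall U, O U -> U `<=` X),
      O X,
      O set0,
      (forall F : set (set P), F `<=` O -> O (\bigcup_(U in F) U)) &
      (forall U V, O U -> O V -> O (U `&` V))].

Definition homeomorphism {P Q : Type} (X : set P) (OX : set (set P))
    (Y : set Q) (OY : set (set Q)) (psi : P -> Q) : Prop :=
  [/\ (forall a b, X a -> X b -> psi a = psi b -> a = b),
      psi @` X = Y &
      (forall U, U `<=` X -> (OX U <-> OY (psi @` U)))].

(* A tree: a strict partial order in which the predecessors of every node are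
   well-ordered. The nodes are all inhabitants of the type N. *)
Definition is_tree {N : Type} (lt : N -> N -> Prop) : Prop :=
  [/\ (forall x, ~ lt x x),
      (forall x y z, lt x y -> lt y z -> lt x z),
      (forall x y z, lt y x -> lt z x -> [\/ y = z, lt y z | lt z y]) &
      (forall x (A : set N), A `<=` [set y | lt y x] -> A !=set0 ->
         exists2 m, A m & forall a, A a -> m = a \/ lt m a)].

Definition sons {N : Type} (lt : N -> N -> Prop) (x : N) : set N :=
  [set y | lt x y /\ ~ (exists z, lt x z /\ lt z y)].

Definition is_maximal {N : Type} (lt : N -> N -> Prop) (x : N) : Prop :=
  ~ (exists y, lt x y).

Definition is_chain {N : Type} (lt : N -> N -> Prop) (B : set N) : Prop :=
  forall x y, B x -> B y -> [\/ x = y, lt x y | lt y x].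

Definition is_branch {N : Type} (lt : N -> N -> Prop) (B : set N) : Prop :=
  is_chain lt B /\ (forall C, is_chain lt C -> B `<=` C -> C = B).

Definition is_least {N : Type} (lt : N -> N -> Prop) (r : N) : Prop :=
  forall x, x = r \/ lt r x.

Definition sprefix (s t : seq nat) : Prop :=
  (size s < size t)%N /\ s = take (size s) t.

Definition omega_omega_tree {N : Type} (lt : N -> N -> Prop) : Prop :=
  exists phi : N -> seq nat, bijective phi /\
    (forall x y, lt x y <-> sprefix (phi x) (phi y)).

(* A foliage tree is given by a skeleton (N, lt) and leaves l : N -> set P. *)
Definition flesh {N P : Type} (l : N -> set P) : set P :=
  [set p | exists x, l x p].

Definition locally_strict {N P : Type} (lt : N -> N -> Prop) (l : N -> set P)
  : Prop :=
  forall x, ~ is_maximal lt x ->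
    l x = \bigcup_(s in sons lt x) l s /\
    (forall s t, sons lt x s -> sons lt x t -> s <> t -> l s `&` l t = set0).

Definition strict_branches {N P : Type} (lt : N -> N -> Prop) (l : N -> set P)
  : Prop :=
  (exists x : N, True) /\
  (forall B, is_branch lt B -> exists p, \bigcap_(x in B) l x = [set p]).

Definition open_in {N P : Type} (O : set (set P)) (l : N -> set P) : Prop :=
  forall x, O (l x).

Definition baire_foliage_tree {N P : Type} (lt : N -> N -> Prop)
  (l : N -> set P) (X : set P) (O : set (set P)) : Prop :=
  [/\ open_in O l, locally_strict lt l, omega_omega_tree lt,
      strict_branches lt l & exists2 r, is_least lt r & l r = X].

Definition shoot {N P : Type} (lt : N -> N -> Prop) (l : N -> set P) (v : N)
  : set (set P) :=
  [set G | exists2 C : set N, C `<=` sons lt v /\ finite_set (sons lt v `\` C)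
                            & G = \bigcup_(x in C) l x].

Definition scope {N P : Type} (l : N -> set P) (p : P) : set N :=
  [set x | l x p].

Definition refines {P : Type} (gamma delta : set (set P)) : Prop :=
  forall D, delta D -> D !=set0 ->
    exists G, [/\ gamma G, G !=set0 & G `<=` D].

Definition nbhd_in {P : Type} (X : set P) (O : set (set P)) (p : P) (U : set P)
  : Prop :=
  U `<=` X /\ exists V, [/\ O V, V p & V `<=` U].

Definition grows_into {N P : Type} (lt : N -> N -> Prop) (l : N -> set P)
  (X : set P) (O : set (set P)) : Prop :=
  forall p U, X p -> nbhd_in X O p U ->
    exists2 z, scope l p z & refines (shoot lt l z) [set U].

Definition pi_tree {N P : Type} (lt : N -> N -> Prop) (l : N -> set P)
  (X : set P) (O : set (set P)) : Prop :=
  baire_foliage_tree lt l X O /\ grows_into lt l X O.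

Definition foliage_iso {N1 P1 N2 P2 : Type}
  (lt1 : N1 -> N1 -> Prop) (l1 : N1 -> set P1)
  (lt2 : N2 -> N2 -> Prop) (l2 : N2 -> set P2)
  (phi : N1 -> N2) (psi : P1 -> P2) : Prop :=
  [/\ bijective phi,
      (forall x y, lt1 x y <-> lt2 (phi x) (phi y)),
      (forall a b, flesh l1 a -> flesh l1 b -> psi a = psi b -> a = b),
      psi @` flesh l1 = flesh l2 &
      (forall x, psi @` l1 x = l2 (phi x))].

Definition S_leaf (x : seq nat) : set (nat -> nat) :=
  [set p | forall i, (i < size x)%N -> p i = nth 0%N x i].

(* Main.v *)
Require Import Defs.
From mathcomp Require Import all_boot.
From mathcomp Require Import boolp classical_sets cardinality.
From mathcomp Require Import zify.

Set Implicit Arguments.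
Unset Strict Implicit.
Unset Printing Implicit Defensive.
Local Open Scope classical_set_scope.

Lemma sprefix_nth s t : sprefix s t <->
  (size s < size t)%N /\ (forall i, (i < size s)%N -> nth 0%N s i = nth 0%N t i).
Proof.
split.
  move=> [h e]; split=> // i hi; by rewrite [in LHS]e nth_take.
move=> [h e]; split=> //; apply: (@eq_from_nth _ 0%N).
  by rewrite size_takel // ltnW.
by move=> i hi; rewrite nth_take // e.
Qed.

Definition agree (s t : seq nat) := forall i, (i < size s)%N -> (i < size t)%N ->
  nth 0%N s i = nth 0%N t i.

Lemma comp_agree s t : [\/ s = t, sprefix s t | sprefix t s] -> agree s t.
Proof.
case=> [->|/sprefix_nth [_ h]|/sprefix_nth [_ h]] i hi hj //; first exact: h.
by rewrite h.
Qed.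

Lemma agree_eq s t : size s = size t -> agree s t -> s = t.
Proof. move=> e h; apply: (@eq_from_nth _ 0%N) => // i hi; apply: h => //; by rewrite -e. Qed.

Lemma sons_sprefix s t : sons sprefix s t <-> exists n, t = rcons s n.
Proof.
split.
  move=> [[h e] nm].
  have hs : size t = (size s).+1.
    apply/eqP; rewrite eqn_leq h andbT; apply/negP => /negP; rewrite -ltnNge => h2.
    apply: nm; exists (take (size s).+1 t); split.
      split; first by rewrite size_takel // ltnW.
      by rewrite take_takel // -e.
    split; first by rewrite size_takel // ltnW.
    by rewrite size_takel // ltnW.
  exists (nth 0%N t (size s)).
  have ht : t = take (size s).+1 t by rewrite -hs take_size.
  by rewrite {1}ht (take_nth 0%N) ?hs // -e.
move=> [n ->]; split.
  by split; rewrite ?size_rcons // -cats1 take_size_cat.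
move=> [z [[h1 _] [h2 _]]]; move: h2; rewrite size_rcons; lia.
Qed.

Lemma not_max_sprefix s : ~ is_maximal sprefix s.
Proof.
move=> h; apply: h; exists (rcons s 0%N).
by have [] := proj2 (sons_sprefix s (rcons s 0%N)) (ex_intro _ 0%N erefl).
Qed.

Lemma mkseq_take (f : nat -> nat) a b : (a <= b)%N -> take a (mkseq f b) = mkseq f a.
Proof.
move=> ab; apply: (@eq_from_nth _ 0%N); first by rewrite size_takel ?size_mkseq.
move=> i; rewrite size_takel ?size_mkseq // => hi.
by rewrite nth_take // !nth_mkseq //; apply: leq_trans ab.
Qed.

Lemma S_leaf_mkseq f s : S_leaf s f <-> s = mkseq f (size s).
Proof.
split.
  move=> h; apply: (@eq_from_nth _ 0%N); first by rewrite size_mkseq.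
  by move=> i hi; rewrite nth_mkseq // h.
by move=> e i hi; rewrite e nth_mkseq.
Qed.

Lemma chain_mkseq (f : nat -> nat) : is_chain sprefix (range (mkseq f)).
Proof.
move=> _ _ [a _ <-] [b _ <-].
case: (ltngtP a b) => h.
- apply: Or32; split; rewrite !size_mkseq //; by rewrite mkseq_take // ltnW.
- apply: Or33; split; rewrite !size_mkseq //; by rewrite mkseq_take // ltnW.
- by apply: Or31; rewrite h.
Qed.

Lemma branch_mkseq (f : nat -> nat) : is_branch sprefix (range (mkseq f)).
Proof.
split; first exact: chain_mkseq.
move=> C hC sub; apply/seteqP; split=> c Cc; last exact: sub.
exists (size c) => //.
have := hC c (mkseq f (size c)) Cc (sub _ (ex_intro2 _ _ _ I erefl)).
case=> [e|[h _]|[h _]]; first by rewrite -e.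
  by move: h; rewrite size_mkseq ltnn.
by move: h; rewrite size_mkseq ltnn.
Qed.

Lemma branch_sprefix B : is_branch sprefix B -> exists f, B = range (mkseq f).
Proof.
move=> [hB mB].
pose f i := xget 0%N [set n | exists t, B t /\ (i < size t)%N /\ nth 0%N t i = n].
have key t : B t -> t = mkseq f (size t).
  move=> Bt; apply: (@eq_from_nth _ 0%N); first by rewrite size_mkseq.
  move=> i hi; rewrite nth_mkseq // /f.
  case: xgetP => [n _ [t' [Bt' [hi' <-]]]|].
    by apply: (comp_agree (hB _ _ Bt Bt')).
  by move=> /(_ (nth 0%N t i)) h; exfalso; apply: h; exists t.
exists f; apply: esym; apply: mB; first exact: chain_mkseq.
move=> t Bt; exists (size t) => //; by rewrite -key.
Qed.

Lemma bigcap_S (f : nat -> nat) : \bigcap_(x in range (mkseq f)) S_leaf x = [set f].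
Proof.
apply/seteqP; split=> g.
  move=> h; apply: funext => i.
  have := h (mkseq f i.+1) (ex_intro2 _ _ _ I erefl) i.
  by rewrite size_mkseq nth_mkseq // => ->.
move=> -> _ [k _ <-]; apply/S_leaf_mkseq; by rewrite size_mkseq.
Qed.

Lemma S_LS : locally_strict sprefix S_leaf.
Proof.
move=> s _; split.
  apply/seteqP; split=> f.
    move=> h; exists (mkseq f (size s).+1).
      apply/sons_sprefix; exists (f (size s)).
      have e := (S_leaf_mkseq f s).1 h.
      rewrite -cats1 /mkseq -addn1 iotaD map_cat add0n /=.
      by rewrite -/(mkseq f (size s)) -e.
    by rewrite (S_leaf_mkseq f _) size_mkseq.
  move=> [t /sons_sprefix [n ->] h] i hi; rewrite (h i).
    by rewrite nth_rcons hi.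
  by rewrite size_rcons ltnS ltnW.
move=> _ _ /sons_sprefix [a ->] /sons_sprefix [b ->] ab.
apply/seteqP; split=> // f [ha hb]; apply: ab.
have := ha (size s); have := hb (size s).
by rewrite !size_rcons !nth_rcons !ltnn !eqxx => -> // ->.
Qed.

Lemma S_SB : strict_branches sprefix S_leaf.
Proof.
split; first by exists [::].
move=> B /branch_sprefix [f ->]; exists f; exact: bigcap_S.
Qed.

Lemma S_root : is_least sprefix [::] /\ S_leaf [::] = setT.
Proof.
split.
  case=> [|a s]; [by left|right]; split=> //.
by apply/seteqP; split=> // f _ i.
Qed.

Lemma S_OO : omega_omega_tree sprefix.
Proof. exists id; split=> //; exact: (Bijective (g:=id)). Qed.

Section Core.
Variables (P : Type) (l : seq nat -> set P).
Hypotheses (LS : locally_strict sprefix l) (SB : strict_branches sprefix l).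

Lemma LS' s : l s = \bigcup_(t in sons sprefix s) l t.
Proof. exact: (LS (@not_max_sprefix s)).1. Qed.

Lemma lext s p : l s p -> exists n, l (rcons s n) p.
Proof.
by rewrite {1}LS' => -[t /sons_sprefix [n ->] h]; exists n.
Qed.

Lemma ldown s n p : l (rcons s n) p -> l s p.
Proof.
move=> h; rewrite LS'; exists (rcons s n) => //; apply/sons_sprefix; by exists n.
Qed.

Lemma ldis s a b p : l (rcons s a) p -> l (rcons s b) p -> a = b.
Proof.
move=> ha hb; apply: contrapT => ab.
have := (LS (@not_max_sprefix s)).2 (rcons s a) (rcons s b).
have sa : sons sprefix s (rcons s a) by apply/sons_sprefix; exists a.
have sb : sons sprefix s (rcons s b) by apply/sons_sprefix; exists b.
move=> /(_ sa sb) h.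
have : (l (rcons s a) `&` l (rcons s b)) p by [].
rewrite h // => e; by move/rcons_inj: e => [].
Qed.

Lemma ltake t p : l t p -> forall k, l (take k t) p.
Proof.
elim/last_ind: t => [|t n IH] h k; first by [].
case: (leqP k (size t)) => hk.
  by rewrite -cats1 takel_cat //; apply: IH; apply: ldown h.
by rewrite take_oversize // size_rcons.
Qed.

Lemma lsame s t p : l s p -> l t p -> size s = size t -> s = t.
Proof.
elim/last_ind: s t => [|s a IH] t hs ht e.
  by move: e => /esym/size0nil ->.
case/lastP: t ht e => [|t b] ht; rewrite ?size_rcons //.
move=> [e]; have st : s = t by apply: IH => //; [exact: ldown hs|exact: ldown ht].
subst t; by rewrite (ldis hs ht).
Qed.

Lemma lcomp s t p : l s p -> l t p -> agree s t.
Proof.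
move=> hs ht i i1 i2.
have e : take (minn (size s) (size t)) s = take (minn (size s) (size t)) t.
  apply: (lsame (p := p)); [exact: ltake|exact: ltake|].
  rewrite !size_take_min; lia.
have hi : (i < minn (size s) (size t))%N by rewrite leq_min i1 i2.
by rewrite -(nth_take 0%N hi s) e nth_take.
Qed.

Lemma lsizes t p : l t p -> forall k, exists s, size s = k /\ l s p.
Proof.
move=> ht; elim=> [|k [s [e hs]]].
  by exists [::]; split=> //; have := ltake ht 0; rewrite take0.
have [n hn] := lext hs; exists (rcons s n); by rewrite size_rcons e.
Qed.

Definition cpsi (p : P) (i : nat) : nat :=
  xget 0%N [set n | exists s, l s p /\ (i < size s)%N /\ nth 0%N s i = n].

Lemma cpsi_ok s p : l s p -> forall i, (i < size s)%N -> cpsi p i = nth 0%N s i.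
Proof.
move=> hs i hi; rewrite /cpsi; case: xgetP => [n _ [t [ht [hi' <-]]]|].
  by apply: (lcomp ht hs).
by move=> /(_ (nth 0%N s i)) h; exfalso; apply: h; exists s.
Qed.

Lemma cpsi_mk p t : l t p -> forall k, l (mkseq (cpsi p) k) p.
Proof.
move=> ht k; have [s [<- hs]] := lsizes ht k.
suff -> : mkseq (cpsi p) (size s) = s by [].
apply: (@eq_from_nth _ 0%N); first by rewrite size_mkseq.
by move=> i; rewrite size_mkseq => hi; rewrite nth_mkseq // (cpsi_ok hs).
Qed.

Lemma core : foliage_iso sprefix l sprefix S_leaf id cpsi.
Proof.
have leafE s : cpsi @` l s = S_leaf s.
  apply/seteqP; split.
    by move=> _ [p hp <-] i hi; rewrite (cpsi_ok hp).
  move=> f /S_leaf_mkseq e.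
  have [p hp] := SB.2 _ (branch_mkseq f).
  have hpB : (\bigcap_(x in range (mkseq f)) l x) p by rewrite hp.
  have hps : l s p by rewrite e; apply: hpB; exists (size s).
  exists p => //; apply: funext => i.
  have hi : l (mkseq f i.+1) p by apply: hpB; exists i.+1.
  by rewrite (cpsi_ok hi) ?size_mkseq // nth_mkseq.
split.
- exact: (Bijective (g:=id)).
- by [].
- move=> a b [s ha] [t hb] e.
  pose f := cpsi a.
  have [q hq] := SB.2 _ (branch_mkseq f).
  have inB c u : l u c -> cpsi c = f -> (\bigcap_(x in range (mkseq f)) l x) c.
    by move=> hc ef _ [k _ <-]; rewrite -ef; apply: cpsi_mk hc k.
  have := inB a s ha erefl; have := inB b t hb (esym e).
  by rewrite hq => -> ->.
- apply/seteqP; split.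
    by move=> _ [p [x hx] <-]; exists x; rewrite -leafE; exists p.
  move=> f _.
  have : S_leaf [::] f by move=> i.
  by rewrite -leafE => -[p hp <-]; exists p => //; exists [::].
- by move=> x; exact: leafE.
Qed.

End Core.

Section Iso.
Variables (N1 P1 N2 P2 : Type) (lt1 : N1 -> N1 -> Prop) (l1 : N1 -> set P1)
  (lt2 : N2 -> N2 -> Prop) (l2 : N2 -> set P2) (phi : N1 -> N2) (psi : P1 -> P2).
Hypothesis H : foliage_iso lt1 l1 lt2 l2 phi psi.

Lemma k1 x p : l1 x p <-> flesh l1 p /\ l2 (phi x) (psi p).
Proof.
case: H => _ _ inj _ lf; split.
  by move=> h; split; [exists x|rewrite -lf; exists p].
move=> [fp]; rewrite -lf => -[q hq e].
by rewrite -(inj q p) //; exists x.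
Qed.

Lemma k2 x y : sons lt1 x y <-> sons lt2 (phi x) (phi y).
Proof.
case: H => [[g phig gphi]] ord _ _ _; split.
  move=> [hxy nm]; split; first by apply/ord.
  move=> [z [h1 h2]]; apply: nm; exists (g z); split; apply/ord; by rewrite gphi.
move=> [hxy nm]; split; first by apply/ord.
move=> [z [h1 h2]]; apply: nm; exists (phi z); split; by apply/ord.
Qed.

Lemma k3 x : is_maximal lt1 x <-> is_maximal lt2 (phi x).
Proof.
case: H => [[g phig gphi]] ord _ _ _; split.
  move=> h [y hy]; apply: h; exists (g y); apply/ord; by rewrite gphi.
move=> h [y hy]; apply: h; exists (phi y); by apply/ord.
Qed.

Lemma LS_transfer : locally_strict lt2 l2 -> locally_strict lt1 l1.
Proof.
move=> LS2 x /k3 nm; have [e d] := LS2 _ nm.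
case: H => [[g phig gphi]] ord inj _ lf.
split.
  apply/seteqP; split=> p.
    move=> /k1 [fp]; rewrite e => -[s' hs' hp].
    exists (g s'); first by apply/k2; rewrite gphi.
    by apply/k1; split=> //; rewrite gphi.
  move=> [s /k2 hs /k1 [fp hp]]; apply/k1; split=> //.
  by rewrite e; exists (phi s).
move=> s t /k2 hs /k2 ht st; apply/seteqP; split=> // p [/k1 [_ h1] /k1 [_ h2]].
have st' : phi s <> phi t by move=> E; apply: st; rewrite -(phig s) E phig.
have : (l2 (phi s) `&` l2 (phi t)) (psi p) by [].
by rewrite d.
Qed.

Lemma SB_transfer : strict_branches lt2 l2 -> strict_branches lt1 l1.
Proof.
case: H => [[g phig gphi]] ord inj fl lf.
move=> [[x2 _] SB2]; split; first by exists (g x2).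
move=> B [cB mB].
have bB : is_branch lt2 (phi @` B).
  split.
    move=> _ _ [a Ba <-] [b Bb <-].
    by case: (cB a b Ba Bb) => [->|h|h]; [apply: Or31|apply: Or32; apply/ord|apply: Or33; apply/ord].
  move=> C cC sub.
  have e : phi @^-1` C = B.
    apply: mB.
      move=> a b Ca Cb; case: (cC _ _ Ca Cb) => [h|h|h].
      + by apply: Or31; rewrite -(phig a) h phig.
      + by apply: Or32; apply/ord.
      + by apply: Or33; apply/ord.
    by move=> a Ba; apply: sub; exists a.
  apply/seteqP; split=> // c Cc; exists (g c); last by rewrite gphi.
  by rewrite -e /= gphi.
have [q hq] := SB2 _ bB.
have [b Bb] : B !=set0.
  apply/set0P/negP => /eqP B0.
  have : [set g x2] = B by apply: mB; [move=> a b -> ->; apply: Or31|rewrite B0].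
  by rewrite B0 => E; have : [set g x2] (g x2) by []; rewrite E.
have qb : l2 (phi b) q.
  have : (\bigcap_(x in phi @` B) l2 x) q by rewrite hq.
  by apply; exists b.
have : flesh l2 q by exists (phi b).
rewrite -fl => -[p fp pq].
exists p; apply/seteqP; split=> r.
  move=> hr; have fr : flesh l1 r by exists b; apply: hr.
  apply: inj => //.
  have : (\bigcap_(x in phi @` B) l2 x) (psi r).
    by move=> _ [x Bx <-]; have := (k1 x r).1 (hr x Bx) => -[].
  by rewrite hq pq => ->.
move=> -> x Bx; apply/k1; split=> //; rewrite pq.
have : (\bigcap_(x in phi @` B) l2 x) q by rewrite hq.
by apply; exists x.
Qed.

End Iso.

Section Top.
Variables (N1 P1 N2 P2 : Type) (lt1 : N1 -> N1 -> Prop) (l1 : N1 -> set P1)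
  (lt2 : N2 -> N2 -> Prop) (l2 : N2 -> set P2) (phi : N1 -> N2) (psi : P1 -> P2)
  (X1 : set P1) (O1 : set (set P1)) (X2 : set P2) (O2 : set (set P2)).
Hypotheses (H : foliage_iso lt1 l1 lt2 l2 phi psi)
  (T1 : is_topology_on X1 O1) (T2 : is_topology_on X2 O2)
  (E1 : flesh l1 = X1) (E2 : flesh l2 = X2)
  (Hh : homeomorphism X1 O1 X2 O2 psi).

Lemma open_transfer : open_in O2 l2 -> open_in O1 l1.
Proof.
case: H => _ _ _ _ lf; case: Hh => _ _ hO.
move=> o2 x; apply/hO; last by rewrite lf.
by move=> p hp; rewrite -E1; exists x.
Qed.

Lemma grows_G2F : grows_into lt2 l2 X2 O2 -> grows_into lt1 l1 X1 O1.
Proof.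
case: H => [[g phig gphi]] ord inj fl lf; case: Hh => inj' img hO.
case: T1 => T1s _ _ _ _.
move=> G2 p U Xp [UX [V [OV Vp VU]]].
have VX : V `<=` X1 by apply: T1s.
have nb2 : nbhd_in X2 O2 (psi p) (psi @` U).
  split; first by move=> _ [u Uu <-]; rewrite -img; exists u => //; apply: UX.
  exists (psi @` V); split; first by apply/hO.
    by exists p.
  by move=> _ [v Vv <-]; exists v => //; apply: VU.
have X2p : X2 (psi p) by rewrite -img; exists p.
have [z2 hz2 ref] := G2 _ _ X2p nb2.
exists (g z2).
  by apply/(k1 H); split; [rewrite E1|rewrite gphi].
move=> D -> [u Uu].
have [G2' [[C2 [C2s fin] ->] [q Gq] Gsub]] := ref (psi @` U) erefl (ex_intro _ (psi u) (ex_intro2 _ _ u Uu erefl)).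
have injphi : injective phi by move=> a b e; rewrite -(phig a) e phig.
exists (\bigcup_(x in phi @^-1` C2) l1 x); split.
- exists (phi @^-1` C2) => //; split.
    by move=> x Cx; apply/(k2 H); rewrite gphi; exact: C2s.
  have -> : sons lt1 (g z2) `\` phi @^-1` C2 = phi @^-1` (sons lt2 z2 `\` C2).
    apply/seteqP; split=> x [h1 h2]; split => //.
      by move/(k2 H): h1; rewrite gphi.
    by apply/(k2 H); rewrite gphi.
  by apply: finite_preimage => // a b _ _; apply: injphi.
- move: Gq => [c2 Cc2 qc].
  have : flesh l2 q by exists c2.
  rewrite -fl => -[r fr rq].
  exists r; exists (g c2); first by rewrite /= gphi.
  by apply/(k1 H); split; rewrite // gphi rq.
- move=> r [x Cx rx].
  have : (\bigcup_(x in C2) l2 x) (psi r) by exists (phi x) => //; have [] := (k1 H x r).1 rx.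
  have fr : flesh l1 r by exists x.
  move=> /Gsub [u' Uu' e]; rewrite -(inj' u' r) //; first exact: UX.
  by rewrite -E1.
Qed.

Lemma grows_F2G : grows_into lt1 l1 X1 O1 -> grows_into lt2 l2 X2 O2.
Proof.
case: H => [[g phig gphi]] ord inj fl lf; case: Hh => inj' img hO.
case: T2 => T2s _ _ _ _.
move=> G1 q U2 X2q [U2X [V2 [OV2 V2q V2U]]].
have V2X : V2 `<=` X2 by apply: T2s.
have [p Xp pq] : (psi @` X1) q by rewrite img.
subst q.
pose V1 := X1 `&` psi @^-1` V2.
have psiV1 : psi @` V1 = V2.
  apply/seteqP; split; first by move=> _ [a [_ Va] <-].
  move=> v Vv; have : X2 v by apply: V2X.
  by rewrite -img => -[a Xa e]; exists a => //; split => //; rewrite /= e.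
have OV1 : O1 V1 by apply/(hO V1 (@subIsetl _ _ _)); rewrite psiV1.
have nb1 : nbhd_in X1 O1 p (X1 `&` psi @^-1` U2).
  split; first exact: subIsetl.
  exists V1; split=> //; move=> a [Xa Va]; split=> //; exact: V2U.
have [z hz ref] := G1 _ _ Xp nb1.
exists (phi z); first by have [] := (k1 H z p).1 hz.
move=> D -> _.
have pU1 : (X1 `&` psi @^-1` U2) p by split=> //; apply: V2U.
have [G1' [[C1 [C1s fin] ->] [r Gr] Gsub]] := ref _ erefl (ex_intro _ p pU1).
have injphi : injective phi by move=> a b e; rewrite -(phig a) e phig.
exists (\bigcup_(x in phi @` C1) l2 x); split.
- exists (phi @` C1) => //; split.
    by move=> _ [x Cx <-]; apply/(k2 H); exact: C1s.
  have -> : sons lt2 (phi z) `\` phi @` C1 = phi @` (sons lt1 z `\` C1).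
    apply/seteqP; split.
      move=> y [ys ny]; exists (g y); last by rewrite gphi.
      split; first by apply/(k2 H); rewrite gphi.
      by move=> Cg; apply: ny; exists (g y) => //; rewrite gphi.
    move=> _ [x [xs nx] <-]; split; first by apply/(k2 H).
    by move=> [x' Cx' e]; apply: nx; rewrite -(injphi _ _ e).
  exact: finite_image.
- move: Gr => [x Cx rx]; exists (psi r); exists (phi x); first by exists x.
  by have [] := (k1 H x r).1 rx.
- move=> y [_ [x Cx <-]]; rewrite -lf => -[r' rx <-].
  by have [] := Gsub r' (ex_intro2 _ _ x Cx rx).
Qed.

End Top.

Lemma flesh_S : flesh S_leaf = setT.
Proof. apply/seteqP; split=> // f _; exists [::]; by rewrite S_root.2. Qed.

Lemma iso_root (N P : Type) (lt : N -> N -> Prop) (l : N -> set P) phi psi :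
  foliage_iso lt l sprefix S_leaf phi psi ->
  exists r, [/\ is_least lt r, l r = flesh l, phi r = [::] &
     forall r', is_least lt r' -> r' = r].
Proof.
case=> [[g phig gphi]] ord inj fl lf.
have pr : phi (g [::]) = [::] by rewrite gphi.
exists (g [::]); split=> //.
- move=> x; case E : (phi x) => [|a s].
    by left; rewrite -(phig x) E.
  by right; apply/ord; rewrite pr E.
- apply/seteqP; split=> p; first by exists (g [::]).
  move=> fp.
  have : S_leaf (phi (g [::])) (psi p) by rewrite pr S_root.2.
  rewrite -lf => -[q hq e].
  by rewrite -(inj q p) //; exists (g [::]).
- move=> r' hr'; case: (hr' (g [::])) => // /ord.
  by rewrite pr => -[].
Qed.

Theorem lemma4 (N P : Type) (lt : N -> N -> Prop) (l : N -> set P)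
  (X : set P) (OX : set (set P)) :
  is_tree lt -> is_topology_on X OX ->
  [/\
   (* (a) *)
   ((locally_strict lt l /\ omega_omega_tree lt /\ strict_branches lt l) <->
    exists (phi : N -> seq nat) (psi : P -> (nat -> nat)),
      foliage_iso lt l sprefix S_leaf phi psi),
   (* (b) *)
   (baire_foliage_tree lt l X OX <->
    exists (phi : N -> seq nat) (psi : P -> (nat -> nat))
           (tau : set (set (nat -> nat))),
      [/\ foliage_iso lt l sprefix S_leaf phi psi,
          is_topology_on setT tau,
          flesh l = X,
          homeomorphism X OX setT tau psi &
          baire_foliage_tree sprefix S_leaf setT tau]) &
   (* (c) *)
   (pi_tree lt l X OX <->
    exists (phi : N -> seq nat) (psi : P -> (nat -> nat))
           (tau : set (set (nat -> nat))),
      [/\ foliage_iso lt l sprefix S_leaf phi psi,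
          is_topology_on setT tau,
          flesh l = X,
          homeomorphism X OX setT tau psi &
          pi_tree sprefix S_leaf setT tau])].
Proof.
move=> _ TX.
have partA : (locally_strict lt l /\ omega_omega_tree lt /\ strict_branches lt l) <->
    exists (phi : N -> seq nat) (psi : P -> (nat -> nat)),
      foliage_iso lt l sprefix S_leaf phi psi.
  split.
    move=> [LS [[phi [[g phig gphi] ord]] SB]].
    pose l' := fun s => l (g s).
    have fE : flesh l' = flesh l.
      apply/seteqP; split=> p [x h]; first by exists (g x).
      by exists (phi x); rewrite /l' phig.
    have iso_back : foliage_iso sprefix l' lt l g id.
      split.
      - exact: (Bijective gphi phig).
      - by move=> s t; rewrite ord !gphi.
      - by [].
      - by rewrite image_id fE.
      - by move=> s; rewrite image_id.
    have LS' := LS_transfer iso_back LS.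
    have SB' := SB_transfer iso_back SB.
    exists phi, (cpsi l').
    case: (core LS' SB') => _ _ inj fl lf.
    split.
    - exact: (Bijective phig gphi).
    - exact: ord.
    - by rewrite -fE.
    - by rewrite -fE.
    - by move=> x; have := lf (phi x); rewrite /l' phig.
  move=> [phi [psi I]].
  split; first exact: LS_transfer I S_LS.
  split; last exact: SB_transfer I S_SB.
  by case: I => bij ord _ _ _; exists phi.
have partB : baire_foliage_tree lt l X OX <->
    exists (phi : N -> seq nat) (psi : P -> (nat -> nat))
           (tau : set (set (nat -> nat))),
      [/\ foliage_iso lt l sprefix S_leaf phi psi,
          is_topology_on setT tau,
          flesh l = X,
          homeomorphism X OX setT tau psi &
          baire_foliage_tree sprefix S_leaf setT tau].
  split.
    move=> [op LS OO SB [r' lr' lX]].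
    have [phi [psi I]] := partA.1 (conj LS (conj OO SB)).
    have [r [lr fr pr runiq]] := iso_root I.
    have fX : flesh l = X by rewrite -fr -(runiq r' lr') lX.
    case: (I) => [[g phig gphi]] ord inj fl lf.
    have key U : U `<=` X -> X `&` psi @^-1` (psi @` U) = U.
      move=> UX; apply/seteqP; split; last by move=> u Uu; split; [exact: UX|exists u].
      move=> a [Xa [u Uu e]]; rewrite -(inj u a) //; rewrite fX //; exact: UX.
    pose tau := [set V | OX (X `&` psi @^-1` V)].
    case: TX => Ts TXX TX0 TU TI.
    exists phi, psi, tau; split=> //.
    - split=> //.
      + by rewrite /tau /= preimage_setT setIT.
      + by rewrite /tau /= preimage_set0 setI0.
      + move=> F FS; rewrite /tau /=.
        have -> : X `&` psi @^-1` (\bigcup_(U in F) U) =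
                  \bigcup_(W in (fun V => X `&` psi @^-1` V) @` F) W.
          apply/seteqP; split.
            by move=> a [Xa [U FU Ua]]; exists (X `&` psi @^-1` U) => //; exists U.
          by move=> a [_ [U FU <-] [Xa Ua]]; split=> //; exists U.
        by apply: TU => _ [U FU <-]; apply: FS.
      + move=> U V hU hV; rewrite /tau /=.
        have -> : X `&` psi @^-1` (U `&` V) = (X `&` psi @^-1` U) `&` (X `&` psi @^-1` V).
          by apply/seteqP; split=> a; [move=> [Xa [Ua Va]]|move=> [[Xa Ua] [_ Va]]].
        exact: TI.
    - split.
      + by move=> a b Xa Xb; apply: inj; rewrite fX.
      + by rewrite -fX fl flesh_S.
      + by move=> U UX; rewrite /tau /= key.
    - split.
      + move=> s; rewrite /tau /= -(gphi s) -lf key; first exact: op.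
        by move=> p hp; rewrite -fX; exists (g s).
      + exact: S_LS.
      + exact: S_OO.
      + exact: S_SB.
      + by exists [::]; [exact: S_root.1|exact: S_root.2].
  move=> [phi [psi [tau [I Tt fX hom [op LS OO SB _]]]]].
  have [LS1 [OO1 SB1]] := partA.2 (ex_intro _ phi (ex_intro _ psi I)).
  have [r [lr fr _ _]] := iso_root I.
  split=> //.
  - exact: (open_transfer I fX hom op).
  - by exists r; rewrite // fr.
split=> //.
split.
  move=> [bf gr].
  have [phi [psi [tau [I Tt fX hom bS]]]] := partB.1 bf.
  exists phi, psi, tau; split=> //; split=> //.
  exact: (grows_F2G I Tt hom gr).
move=> [phi [psi [tau [I Tt fX hom [bS grS]]]]].
split; first by apply/partB; exists phi, psi, tau.
exact: (grows_G2F I TX fX hom grS).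
Qed.
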